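(* Let $\sigma>0$ and let $\vec\alpha,\vec\beta$ be non-negative sequences, neither identically zero, with $\sum_n n\alpha_n<\infty$ and $\sum_n n\beta_n<\infty$. Then for all integers $m,n\ge0$ and $L\ge1$, $$\frac{1}{2\pi}\int_{-2}^2 u_m(x)u_n(x)(x+\sigma)^L\sqrt{4-x^2}\,dx=\sum_{\vec\gamma\in\mathcal M^{(L)}_{m,n}}w(\vec\gamma),$$ and for real $z_0,z_1$ with $|z_0|,|z_1|\le1$, $$\mathbb E\big[z_0^{\gamma^{(L)}_0}z_1^{\gamma^{(L)}_L}\big]=\frac{\mathsf M_{\vec\alpha,\vec\beta,L}(z_0,z_1)}{\mathsf M_{\vec\alpha,\vec\beta,L}(1,1)},\qquad \mathsf M_{\vec\alpha,\vec\beta,L}(z_0,z_1):=\frac{1}{2\pi}\int_{-2}^2\Phi_{\vec\alpha}(z_0,x)\Phi_{\vec\beta}(z_1,x)(x+\sigma)^L\sqrt{4-x^2}\,dx,$$ where $\Phi_{\vec\alpha}(z,x)=\sum_{n\ge0}\alpha_nz^nu_n(x)$ and $\Phi_{\vec\beta}(z,x)=\sum_{n\ge0}\beta_nz^nu_n(x)$.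
   Context: $u_n$ are the monic Chebyshev polynomials of the second kind: $u_{-1}=0$, $u_0=1$, $xu_n(x)=u_{n+1}(x)+u_{n-1}(x)$ for $n\ge0$ (so $u_n(2\cos\theta)=\sin((n+1)\theta)/\sin\theta$). A Motzkin path of length $L$ is a sequence $(\gamma_0,\dots,\gamma_L)$ of non-negative integers with $|\gamma_k-\gamma_{k-1}|\le1$; $\mathcal M^{(L)}_{m,n}$ is the set of those with $\gamma_0=m$, $\gamma_L=n$, and $\mathcal M^{(L)}=\bigcup_{m,n}\mathcal M^{(L)}_{m,n}$. Weight: $w(\vec\gamma)=\sigma^{\#\{k:\gamma_k=\gamma_{k-1}\}}$. $(\gamma^{(L)}_0,\dots,\gamma^{(L)}_L)$ is a random path with law $\Pr_L(\vec\gamma)=\alpha_{\gamma_0}\beta_{\gamma_L}w(\vec\gamma)/\sum_{\vec\eta\in\mathcal M^{(L)}}\alpha_{\eta_0}\beta_{\eta_L}w(\vec\eta)$. *)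

(* Defs.v *)
From Stdlib Require Import Reals Lra Lia List.
From Coquelicot Require Import Coquelicot.
Import ListNotations.
Open Scope R_scope.

(* Monic Chebyshev polynomials of the second kind:
   u_0 = 1, u_1 = x, u_{n+2} = x u_{n+1} - u_n  (equivalent to x u_n = u_{n+1} + u_{n-1}, u_{-1}=0). *)
Fixpoint cheb_u (n : nat) (x : R) : R :=
  match n with
  | O => 1
  | S O => x
  | S ((S k) as k1) => x * cheb_u k1 x - cheb_u k x
  end.

(* A path (gamma_0,...,gamma_L) is represented as the list [gamma_0; ...; gamma_L]. *)
Fixpoint adjacent_ok (g : list nat) : Prop :=
  match g with
  | a :: ((b :: _) as t) => (a <= b + 1 /\ b <= a + 1)%nat /\ adjacent_ok t
  | _ => True
  end.

(* Motzkin path of length L (non-negativity is automatic for nat). *)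
Definition is_motzkin (L : nat) (g : list nat) : Prop :=
  length g = S L /\ adjacent_ok g.

Fixpoint flat_steps (g : list nat) : nat :=
  match g with
  | a :: ((b :: _) as t) => ((if Nat.eqb a b then 1 else 0) + flat_steps t)%nat
  | _ => O
  end.

Definition path_weight (sigma : R) (g : list nat) : R := sigma ^ flat_steps g.

Definition path_start (g : list nat) : nat := hd O g.
Definition path_end (g : list nat) : nat := last g O.

(* Enumeration (without repetitions) of all Motzkin paths of length L starting at m:
   the path m :: p where p ranges over paths of length L-1 starting at m-1 (if m>0), m, m+1. *)
Fixpoint motzkin_from (m L : nat) : list (list nat) :=
  match L with
  | O => [[m]]
  | S L' =>
      map (cons m)
        ((match m with O => [] | S m' => motzkin_from m' L' end)
         ++ motzkin_from m L' ++ motzkin_from (S m) L')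
  end.

Definition sumR (l : list R) : R := fold_right Rplus 0 l.

Definition motzkin_weight_sum (sigma : R) (L m n : nat) : R :=
  sumR (map (path_weight sigma)
         (filter (fun g => Nat.eqb (path_end g) n) (motzkin_from m L))).

(* sum over the (countable) set M^{(L)} = union over m of paths starting at m *)
Definition sum_over_paths (L : nat) (F : list nat -> R) : R :=
  Series (fun m => sumR (map F (motzkin_from m L))).

Definition partition_fn (alpha beta : nat -> R) (sigma : R) (L : nat) : R :=
  sum_over_paths L (fun g => alpha (path_start g) * beta (path_end g) * path_weight sigma g).

Definition path_prob (alpha beta : nat -> R) (sigma : R) (L : nat) (g : list nat) : R :=
  alpha (path_start g) * beta (path_end g) * path_weight sigma g / partition_fn alpha beta sigma L.

Definition expect_gen (alpha beta : nat -> R) (sigma : R) (L : nat) (z0 z1 : R) : R :=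
  sum_over_paths L (fun g =>
    path_prob alpha beta sigma L g * z0 ^ path_start g * z1 ^ path_end g).

Definition Phi (alpha : nat -> R) (z x : R) : R :=
  Series (fun n => alpha n * z ^ n * cheb_u n x).

Definition Mfun (alpha beta : nat -> R) (sigma : R) (L : nat) (z0 z1 : R) : R :=
  / (2 * PI) * RInt (fun x => Phi alpha z0 x * Phi beta z1 x * (x + sigma) ^ L
                              * sqrt (4 - x ^ 2)) (-2) 2.

(* Main.v *)
Require Import Defs.
From Stdlib Require Import Reals Lra Lia List.
From Coquelicot Require Import Coquelicot.
Import ListNotations.
Open Scope R_scope.

Lemma cont_mul (f g : R -> R) x : continuous f x -> continuous g x ->
  continuous (fun y => f y * g y) x.
Proof. intros. apply (continuous_mult f g x); auto. Qed.

Lemma cont_minus (f g : R -> R) x : continuous f x -> continuous g x ->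
  continuous (fun y => f y - g y) x.
Proof. intros. apply (continuous_minus f g x); auto. Qed.

Lemma cont_plus (f g : R -> R) x : continuous f x -> continuous g x ->
  continuous (fun y => f y + g y) x.
Proof. intros. apply (continuous_plus f g x); auto. Qed.

Lemma cont_pow (f : R -> R) n x : continuous f x -> continuous (fun y => f y ^ n) x.
Proof.
  intros H; induction n; simpl.
  - apply continuous_const.
  - apply cont_mul; auto.
Qed.

Lemma cheb_cont2 n x : continuous (cheb_u n) x /\ continuous (cheb_u (S n)) x.
Proof.
  induction n as [|n [IH1 IH2]].
  - split; simpl. apply continuous_const. apply continuous_id.
  - split; auto.
    change (continuous (fun y => y * cheb_u (S n) y - cheb_u n y) x).
    apply cont_minus; auto. apply cont_mul; auto. apply continuous_id.
Qed.

Lemma cheb_cont n x : continuous (cheb_u n) x.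
Proof. apply cheb_cont2. Qed.

Lemma wt_cont x : continuous (fun y => sqrt (4 - y ^ 2)) x.
Proof.
  apply continuous_sqrt_comp. apply cont_minus. apply continuous_const.
  apply cont_pow. apply continuous_id.
Qed.

Lemma sin_cheb2 n t : sin (INR (S n) * t) = sin t * cheb_u n (2 * cos t) /\
   sin (INR (S (S n)) * t) = sin t * cheb_u (S n) (2 * cos t).
Proof.
  induction n as [|n [IH1 IH2]].
  - simpl. split. replace (1*t) with t by ring; ring.
    replace ((1+1)*t) with (t + t) by ring. rewrite sin_plus. ring.
  - split; auto.
    change (cheb_u (S (S n)) (2 * cos t)) with
      (2 * cos t * cheb_u (S n) (2 * cos t) - cheb_u n (2 * cos t)).
    replace (sin t * (2 * cos t * cheb_u (S n) (2 * cos t) - cheb_u n (2 * cos t)))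
      with (2 * cos t * (sin t * cheb_u (S n) (2 * cos t)) - sin t * cheb_u n (2 * cos t)) by ring.
    rewrite <- IH1, <- IH2.
    replace (INR (S (S (S n))) * t) with (INR (S (S n)) * t + t) by (rewrite !S_INR; ring).
    replace (INR (S n) * t) with (INR (S (S n)) * t - t) by (rewrite !S_INR; ring).
    rewrite sin_plus, sin_minus. ring.
Qed.

Lemma sin_cheb n t : sin (INR (S n) * t) = sin t * cheb_u n (2 * cos t).
Proof. apply sin_cheb2. Qed.

Lemma exd_cont (f : R -> R) x : ex_derive f x -> continuous f x.
Proof. intros H. apply (ex_derive_continuous (K:=R_AbsRing) (V:=R_NormedModule)). exact H. Qed.

Lemma is_RInt_val (f : R -> R) (a b l l' : R) : is_RInt f a b l -> @eq R l l' -> is_RInt f a b l'.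
Proof. intros H ->; exact H. Qed.

Lemma int_sinsin (m n : nat) :
  is_RInt (fun t => 4 * sin (INR (S m) * t) * sin (INR (S n) * t)) 0 PI
    (if Nat.eqb m n then 2 * PI else 0).
Proof.
  assert (Hid : forall t, 4 * sin (INR (S m) * t) * sin (INR (S n) * t) =
     2 * (cos ((INR m - INR n) * t) - cos ((INR m + INR n + 2) * t))).
  { intros t.
    replace ((INR m - INR n) * t) with (INR (S m) * t - INR (S n) * t) by (rewrite !S_INR; ring).
    replace ((INR m + INR n + 2) * t) with (INR (S m) * t + INR (S n) * t) by (rewrite !S_INR; ring).
    rewrite cos_minus, cos_plus. ring. }
  assert (Hs : 0 < INR m + INR n + 2) by (pose proof (pos_INR m); pose proof (pos_INR n); lra).
  assert (HsPI : sin ((INR m + INR n + 2) * PI) = 0).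
  { apply sin_eq_0_1. exists (Z.of_nat (m + n + 2)). rewrite <- INR_IZR_INZ.
    rewrite !plus_INR. simpl. ring. }
  set (s := INR m + INR n + 2) in *.
  destruct (Nat.eqb_spec m n) as [<-|Hne].
  - replace (2 * PI) with (minus (2 * (PI - sin (s * PI) / s)) (2 * (0 - sin (s * 0) / s))).
    2:{ unfold minus, plus, opp; simpl. rewrite HsPI. 
      replace (s * 0) with 0 by ring. rewrite sin_0. field. lra. }
    eapply is_RInt_ext.
    2: apply (is_RInt_derive (fun t => 2 * (t - sin (s * t) / s))
                (fun t => 2 * (cos ((INR m - INR m) * t) - cos (s * t)))).
    + intros x _. rewrite Hid. reflexivity.
    + intros x _. auto_derive. lra.
      replace ((INR m - INR m) * x) with 0 by ring. rewrite cos_0. field. lra.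
    + intros x _. apply exd_cont. auto_derive. auto.
  - set (d := INR m - INR n).
    assert (Hd : d <> 0).
    { unfold d; intro H. apply Hne. apply INR_eq. lra. }
    assert (HdPI : sin (d * PI) = 0).
    { apply sin_eq_0_1. exists (Z.of_nat m - Z.of_nat n)%Z. rewrite minus_IZR.
      rewrite <- !INR_IZR_INZ. reflexivity. }
    apply (is_RInt_val _ _ _ (minus (2 * (sin (d * PI) / d - sin (s * PI) / s)) (2 * (sin (d * 0) / d - sin (s * 0) / s)))).
    2:{ unfold minus, plus, opp; simpl. rewrite HsPI, HdPI.
      replace (s * 0) with 0 by ring. replace (d * 0) with 0 by ring. rewrite sin_0. field. lra. }
    eapply is_RInt_ext.
    2: apply (is_RInt_derive (fun t => 2 * (sin (d * t) / d - sin (s * t) / s))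
                (fun t => 2 * (cos (d * t) - cos (s * t)))).
    + intros x _. rewrite Hid. reflexivity.
    + intros x _. auto_derive; auto. field. split; lra.
    + intros x _. apply exd_cont. auto_derive. auto.
Qed.

Lemma exR_cont (f : R->R) a b : (forall z, Rmin a b <= z <= Rmax a b -> continuous f z) -> ex_RInt f a b.
Proof. intros H; apply (@ex_RInt_continuous R_CompleteNormedModule); auto. Qed.

Lemma sqrt_cos t : 0 <= t <= PI -> sqrt (4 - (2 * cos t) ^ 2) = 2 * sin t.
Proof.
  intros Ht. pose proof (sin_ge_0 t (proj1 Ht) (proj2 Ht)).
  replace (4 - (2 * cos t) ^ 2) with ((2 * sin t) ^ 2).
  - apply sqrt_pow2. lra.
  - pose proof (sin2_cos2 t). unfold Rsqr in *. nra.
Qed.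

Lemma ortho m n : is_RInt (fun x => cheb_u m x * cheb_u n x * sqrt (4 - x^2)) (-2) 2
   (if Nat.eqb m n then 2*PI else 0).
Proof.
  set (f := fun x => cheb_u m x * cheb_u n x * sqrt (4 - x^2)).
  assert (Hc : forall x, continuous f x).
  { intros x. unfold f. apply cont_mul. apply cont_mul; apply cheb_cont. apply wt_cont. }
  assert (H := is_RInt_comp f (fun t => 2 * cos t) (fun t => - (2 * sin t)) 0 PI
     (fun x _ => Hc _)).
  assert (H2 : is_RInt (fun y : R => scal (- (2 * sin y)) (f (2 * cos y))) 0 PI
              (RInt f (2 * cos 0) (2 * cos PI))).
  { apply H. intros x _. split.
    - auto_derive; auto. ring.
    - apply exd_cont. auto_derive. auto. }
  clear H.
  rewrite cos_0, cos_PI in H2.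
  assert (H3 : is_RInt (fun y : R => scal (- (2 * sin y)) (f (2 * cos y))) 0 PI
               (opp (if Nat.eqb m n then 2*PI else 0))).
  { eapply is_RInt_ext. 2: apply (@is_RInt_opp R_NormedModule); apply int_sinsin.
    intros x Hx. rewrite Rmin_left, Rmax_right in Hx by (pose proof PI_RGT_0; lra).
    unfold f. rewrite sqrt_cos by lra. rewrite !sin_cheb.
    unfold scal, opp; simpl. unfold mult; simpl. ring. }
  assert (E : RInt f (2 * 1) (2 * -1) = opp (if Nat.eqb m n then 2*PI else 0)).
  { rewrite <- (is_RInt_unique _ _ _ _ H2). apply (is_RInt_unique _ _ _ _ H3). }
  replace (2 * 1) with 2 in E by ring. replace (2 * -1) with (-2) in E by ring.
  assert (Hex : ex_RInt f (-2) 2).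
  { apply exR_cont. intros; apply Hc. }
  apply (is_RInt_val _ _ _ _ _ (RInt_correct _ _ _ Hex)).
  rewrite <- opp_RInt_swap by (apply ex_RInt_swap; exact Hex).
  rewrite E. unfold opp; simpl. ring.
Qed.
Lemma mf_shape k L g : In g (motzkin_from k L) -> exists t, g = k :: t.
Proof.
  destruct L; simpl.
  - intros [<-|[]]. exists []; reflexivity.
  - intros H. apply in_map_iff in H. destruct H as [t [<- _]]. eauto.
Qed.

Lemma sumR_app l1 l2 : sumR (l1 ++ l2) = sumR l1 + sumR l2.
Proof. induction l1; simpl. ring. rewrite IHl1. ring. Qed.

Lemma sum_cons_gen sigma m k n (l : list (list nat)) :
  (forall g, In g l -> exists t, g = k :: t) ->
  sumR (map (path_weight sigma) (filter (fun g => Nat.eqb (path_end g) n) (map (cons m) l)))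
  = sigma ^ (if Nat.eqb m k then 1 else 0)%nat *
    sumR (map (path_weight sigma) (filter (fun g => Nat.eqb (path_end g) n) l)).
Proof.
  induction l as [|g l IH]; intros Hl. simpl. ring.
  destruct (Hl g (or_introl eq_refl)) as [t ->].
  assert (IH' := IH (fun g H => Hl g (or_intror H))). clear IH.
  cbn [map filter].
  change (path_end (m :: k :: t)) with (path_end (k :: t)).
  destruct (Nat.eqb (path_end (k :: t)) n); cbn [map sumR fold_right]; fold sumR.
  - unfold sumR in IH' |- *. rewrite IH'. unfold path_weight. cbn [flat_steps]. rewrite pow_add. ring.
  - exact IH'.
Qed.

Lemma mws_step sigma L m n :
  motzkin_weight_sum sigma (S L) m n =
  motzkin_weight_sum sigma L (S m) n + sigma * motzkin_weight_sum sigma L m n +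
  match m with O => 0 | S k => motzkin_weight_sum sigma L k n end.
Proof.
  unfold motzkin_weight_sum. cbn [motzkin_from].
  rewrite !map_app, !filter_app, !map_app, !sumR_app.
  rewrite (sum_cons_gen sigma m m n (motzkin_from m L)) by (intros; eapply mf_shape; eauto).
  rewrite (sum_cons_gen sigma m (S m) n (motzkin_from (S m) L)) by (intros; eapply mf_shape; eauto).
  rewrite Nat.eqb_refl.
  replace (Nat.eqb m (S m)) with false by (symmetry; apply Nat.eqb_neq; lia).
  destruct m as [|k]; simpl.
  - ring.
  - rewrite (sum_cons_gen sigma (S k) k n (motzkin_from k L)) by (intros; eapply mf_shape; eauto).
    replace (Nat.eqb k (S (S k))) with false by (symmetry; apply Nat.eqb_neq; lia).
    replace (Nat.eqb k k) with true by (symmetry; apply Nat.eqb_refl).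
    replace (Nat.eqb (S k) k) with false by (symmetry; apply Nat.eqb_neq; lia).
    simpl. ring.
Qed.

Lemma mws_0 sigma m n : motzkin_weight_sum sigma 0 m n = if Nat.eqb m n then 1 else 0.
Proof.
  unfold motzkin_weight_sum. simpl. unfold path_end. simpl.
  destruct (Nat.eqb m n); simpl; unfold path_weight; simpl; ring.
Qed.

Lemma isR_plus (f g : R -> R) a b If Ig : is_RInt f a b If -> is_RInt g a b Ig ->
  is_RInt (fun x => f x + g x) a b (If + Ig).
Proof. intros H1 H2. apply (@is_RInt_plus R_NormedModule f g a b If Ig H1 H2). Qed.

Lemma isR_scal (f : R -> R) a b k If : is_RInt f a b If ->
  is_RInt (fun x => k * f x) a b (k * If).
Proof. intros H1. apply (@is_RInt_scal R_NormedModule f a b k If H1). Qed.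

Lemma isR_ext (f g : R -> R) a b l : (forall x, f x = g x) -> is_RInt f a b l -> is_RInt g a b l.
Proof. intros H. apply is_RInt_ext. intros; auto. Qed.

Lemma cheb_rec m x sigma : (x + sigma) * cheb_u m x =
  cheb_u (S m) x + sigma * cheb_u m x + match m with O => 0 | S k => cheb_u k x end.
Proof. destruct m; simpl. ring. ring. Qed.

Lemma part1 sigma L : forall m n,
  is_RInt (fun x => cheb_u m x * cheb_u n x * (x + sigma) ^ L * sqrt (4 - x ^ 2)) (-2) 2
    (2 * PI * motzkin_weight_sum sigma L m n).
Proof.
  induction L as [|L IH]; intros m n.
  - rewrite mws_0. eapply isR_ext. 2: apply (is_RInt_val _ _ _ _ _ (ortho m n)).
    + intros x; simpl; ring.
    + destruct (Nat.eqb m n); ring.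
  - rewrite mws_step. destruct m as [|k].
    + eapply isR_ext. 2: apply (is_RInt_val _ _ _ _ _ (isR_plus _ _ _ _ _ _ (IH 1%nat n) (isR_scal _ _ _ sigma _ (IH 0%nat n)))).
      * intros x. simpl. ring.
      * ring.
    + eapply isR_ext. 2: apply (is_RInt_val _ _ _ _ _ (isR_plus _ _ _ _ _ _ (isR_plus _ _ _ _ _ _ (IH (S (S k)) n) (isR_scal _ _ _ sigma _ (IH (S k) n))) (IH k n))).
      * intros x. cbv beta.
        replace (cheb_u (S k) x * cheb_u n x * (x + sigma) ^ S L * sqrt (4 - x ^ 2)) with
          (((x + sigma) * cheb_u (S k) x) * cheb_u n x * (x + sigma) ^ L * sqrt (4 - x ^ 2)) by (simpl; ring).
        rewrite cheb_rec. ring.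
      * ring.
Qed.
Lemma exs_le (a B : nat -> R) : (forall n, Rabs (a n) <= B n) -> ex_series B -> ex_series a.
Proof. intros H HB. apply (@ex_series_le R_AbsRing R_CompleteNormedModule a B); auto. Qed.

Lemma tail_bound (a B : nat -> R) : (forall n, Rabs (a n) <= B n) -> ex_series B ->
  forall K, Rabs (Series a - sum_n a K) <= Series B - sum_n B K.
Proof.
  intros H HB K.
  assert (Ha : ex_series a) by (eapply exs_le; eauto).
  rewrite !sum_n_Reals.
  rewrite (Series_incr_n a (S K)) by (lia || auto).
  rewrite (Series_incr_n B (S K)) by (lia || auto).
  simpl pred.
  replace (sum_f_R0 a K + Series (fun k => a (S K + k)%nat) - sum_f_R0 a K)
    with (Series (fun k => a (S K + k)%nat)) by ring.
  replace (sum_f_R0 B K + Series (fun k => B (S K + k)%nat) - sum_f_R0 B K)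
    with (Series (fun k => B (S K + k)%nat)) by ring.
  assert (HBs : ex_series (fun k => B (S K + k)%nat)) by (apply ex_series_incr_n; auto).
  eapply Rle_trans. apply Series_Rabs.
  - eapply exs_le. 2: exact HBs. intros n. rewrite Rabs_Rabsolu. apply H.
  - apply Series_le; auto. intros n; split. apply Rabs_pos. apply H.
Qed.

Lemma tail_small (B : nat -> R) : ex_series B -> forall eps : posreal,
  eventually (fun K => Series B - sum_n B K < eps).
Proof.
  intros HB eps.
  assert (H := Series_correct B HB).
  unfold is_series in H.
  generalize (proj1 (filterlim_locally _ _) H eps).
  apply filter_imp. intros K HK.
  change (Rabs (sum_n B K - Series B) < eps) in HK.
  apply Rabs_def2 in HK. lra.
Qed.

Definition clamp x := Rmax (-2) (Rmin 2 x).
Lemma clamp_in x : -2 <= clamp x <= 2.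
Proof. unfold clamp, Rmax, Rmin. destruct (Rle_dec 2 x); destruct (Rle_dec (-2) _); lra. Qed.
Lemma clamp_id x : -2 <= x <= 2 -> clamp x = x.
Proof. intros H. unfold clamp, Rmax, Rmin. destruct (Rle_dec 2 x); destruct (Rle_dec (-2) _); lra. Qed.

Lemma Gen (b B : nat -> R) (h : R -> R) (C : R) (I : nat -> R) :
  ex_series B ->
  (forall n y, -2 <= y <= 2 -> Rabs (b n * cheb_u n y) <= B n) ->
  (forall y, -2 <= y <= 2 -> Rabs (h y) <= C) ->
  (forall n, is_RInt (fun x => h (clamp x) * cheb_u n (clamp x)) (-2) 2 (I n)) ->
  is_RInt (fun x => h (clamp x) * Series (fun n => b n * cheb_u n (clamp x))) (-2) 2
    (Series (fun n => b n * I n)).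
Proof.
  intros HB Hb Hh HI.
  set (fK := fun (K : nat) x => h (clamp x) * sum_n (fun n => b n * cheb_u n (clamp x)) K).
  set (g := fun x => h (clamp x) * Series (fun n => b n * cheb_u n (clamp x))).
  assert (HfK : forall K, is_RInt (fK K) (-2) 2 (sum_n (fun n => b n * I n) K)).
  { induction K.
    - rewrite sum_O. eapply isR_ext. 2: apply (isR_scal _ _ _ (b 0%nat) _ (HI 0%nat)).
      intros x; unfold fK; rewrite sum_O; ring.
    - rewrite sum_Sn. eapply isR_ext.
      2: apply (is_RInt_val _ _ _ _ _ (isR_plus _ _ _ _ _ _ IHK (isR_scal _ _ _ (b (S K)) _ (HI (S K))))).
      + intros x; unfold fK; rewrite sum_Sn. unfold plus; simpl. ring.
      + unfold plus; simpl. ring. }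
  assert (Hunif : filterlim fK eventually (locally (g : fct_UniformSpace R R_UniformSpace))).
  { apply filterlim_locally. intros eps.
    set (C1 := Rabs C + 1).
    assert (HC1: 0 < C1) by (unfold C1; pose proof (Rabs_pos C); lra).
    assert (He : 0 < eps / C1) by (apply Rdiv_lt_0_compat; [apply cond_pos|lra]).
    generalize (tail_small B HB (mkposreal _ He)). apply filter_imp. intros K HK t.
    change (Rabs (fK K t - g t) < eps).
    unfold fK, g.
    rewrite <- Rmult_minus_distr_l, Rabs_mult.
    assert (Hy := clamp_in t).
    assert (Ht := tail_bound (fun n => b n * cheb_u n (clamp t)) B (fun n => Hb n _ Hy) HB K).
    rewrite Rabs_minus_sym in Ht. simpl in HK.
    assert (Hh' : Rabs (h (clamp t)) <= C1) by (unfold C1; pose proof (Hh _ Hy); pose proof (Rle_abs C); lra).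
    set (d := Rabs (sum_n (fun n => b n * cheb_u n (clamp t)) K - Series (fun n => b n * cheb_u n (clamp t)))) in *.
    assert (Hd0 : 0 <= d) by apply Rabs_pos.
    assert (Hd : d < eps / C1) by lra.
    apply Rle_lt_trans with (C1 * d). apply Rmult_le_compat_r; auto.
    apply Rlt_le_trans with (C1 * (eps / C1)). apply Rmult_lt_compat_l; auto.
    right; field; lra. }
  destruct (@filterlim_RInt nat R_CompleteNormedModule fK (-2) 2 eventually eventually_filter g _ HfK Hunif) as [If [Hlim HR]].
  rewrite (is_series_unique _ If Hlim). exact HR.
Qed.

Lemma cheb_E n y : cheb_u n y ^2 + cheb_u (S n) y ^2 - y * cheb_u n y * cheb_u (S n) y = 1.
Proof.
  induction n as [|n IH]. simpl; ring.
  change (cheb_u (S (S n)) y) with (y * cheb_u (S n) y - cheb_u n y).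
  rewrite <- IH. ring.
Qed.

Lemma cheb_step n y : -2 <= y <= 2 -> Rabs (cheb_u (S n) y) <= Rabs (cheb_u n y) + 1.
Proof.
  intros Hy. pose proof (cheb_E n y) as E.
  set (u0 := cheb_u n y) in *. set (u1 := cheb_u (S n) y) in *.
  set (a := u1 - y / 2 * u0).
  assert (Ha2 : a ^ 2 <= 1).
  { unfold a. assert (0 <= (1 - y^2/4) * u0^2).
    { apply Rmult_le_pos. nra. nra. }
    nra. }
  assert (Ha : Rabs a <= 1) by (apply Rabs_le; nra).
  replace u1 with (a + y / 2 * u0) by (unfold a; ring).
  eapply Rle_trans. apply Rabs_triang.
  rewrite Rabs_mult.
  assert (Rabs (y / 2) <= 1) by (apply Rabs_le; lra).
  pose proof (Rabs_pos u0).
  nra.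
Qed.

Lemma cheb_bound n y : -2 <= y <= 2 -> Rabs (cheb_u n y) <= INR n + 1.
Proof.
  intros Hy. induction n as [|n IH].
  - simpl. rewrite Rabs_R1. lra.
  - rewrite S_INR. pose proof (cheb_step n y Hy). lra.
Qed.

Lemma coef_bound (a : nat -> R) z n y : (forall n, 0 <= a n) -> Rabs z <= 1 -> -2 <= y <= 2 ->
  Rabs (a n * z ^ n * cheb_u n y) <= a n * (INR n + 1).
Proof.
  intros Ha Hz Hy. rewrite !Rabs_mult, <- RPow_abs, (Rabs_right (a n)) by (apply Rle_ge; auto).
  assert (Rabs z ^ n <= 1) by (rewrite <- (pow1 n); apply pow_incr; split; auto; apply Rabs_pos).
  pose proof (pow_le (Rabs z) n (Rabs_pos z)).
  pose proof (cheb_bound n y Hy). pose proof (Rabs_pos (cheb_u n y)). pose proof (Ha n).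
  pose proof (pos_INR n).
  apply Rmult_le_compat; auto. apply Rmult_le_pos; auto. 
  rewrite <- (Rmult_1_r (a n)) at 2. apply Rmult_le_compat_l; auto.
Qed.

Lemma exs_mom (a : nat -> R) : (forall n, 0 <= a n) -> ex_series (fun n => INR n * a n) ->
  ex_series (fun n => a n * (INR n + 1)).
Proof.
  intros Ha H.
  apply (proj2 (ex_series_incr_1 (K:=R_AbsRing) (V:=R_NormedModule) _)).
  apply (proj1 (ex_series_incr_1 (K:=R_AbsRing) (V:=R_NormedModule) _)) in H.
  apply (exs_le _ (fun n => 2 * (INR (S n) * a (S n)))).
  - intros n. rewrite Rabs_right.
    + pose proof (Ha (S n)). rewrite S_INR. pose proof (pos_INR n). nra.
    + apply Rle_ge. apply Rmult_le_pos; auto. pose proof (pos_INR (S n)); lra.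
  - apply (ex_series_scal_l (K:=R_AbsRing) (V:=R_NormedModule) 2 _ H).
Qed.

Lemma isR_ext_in (f g : R -> R) a b (l : R) :
  (forall x, Rmin a b < x < Rmax a b -> f x = g x) -> is_RInt f a b l -> is_RInt g a b l.
Proof. apply is_RInt_ext. Qed.

Lemma isR_unique (f : R -> R) a b (l : R) : is_RInt f a b l -> RInt f a b = l.
Proof. intros H. apply (@is_RInt_unique R_CompleteNormedModule). exact H. Qed.

Lemma Phi_bound a z y : (forall n, 0 <= a n) -> Rabs z <= 1 -> -2 <= y <= 2 ->
  ex_series (fun n => a n * (INR n + 1)) ->
  Rabs (Phi a z y) <= Series (fun n => a n * (INR n + 1)).
Proof.
  intros Ha Hz Hy HB. unfold Phi.
  eapply Rle_trans. apply Series_Rabs.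
  - eapply exs_le. 2: exact HB. intros n. rewrite Rabs_Rabsolu. apply coef_bound; auto.
  - apply Series_le; auto. intros n; split. apply Rabs_pos. apply coef_bound; auto.
Qed.

Lemma poly_bound sigma L y : 0 < sigma -> -2 <= y <= 2 -> Rabs ((y + sigma) ^ L) <= (2 + sigma) ^ L.
Proof.
  intros Hs Hy. rewrite <- RPow_abs. apply pow_incr. split. apply Rabs_pos.
  apply Rabs_le. lra.
Qed.

Lemma wt_bound y : Rabs (sqrt (4 - y ^ 2)) <= 2.
Proof.
  rewrite Rabs_right by (apply Rle_ge, sqrt_pos).
  apply Rle_trans with (sqrt (2 ^ 2)).
  - apply sqrt_le_1_alt. nra.
  - rewrite sqrt_pow2; lra.
Qed.

Lemma step1 sigma L beta z1 m : 0 < sigma -> (forall n, 0 <= beta n) ->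
  ex_series (fun n => INR n * beta n) -> Rabs z1 <= 1 ->
  is_RInt (fun x => (cheb_u m (clamp x) * (clamp x + sigma) ^ L * sqrt (4 - clamp x ^ 2))
                    * Phi beta z1 (clamp x)) (-2) 2
    (Series (fun n => beta n * z1 ^ n * (2 * PI * motzkin_weight_sum sigma L m n))).
Proof.
  intros Hs Hb Hmom Hz.
  unfold Phi.
  apply (Gen (fun n => beta n * z1 ^ n) (fun n => beta n * (INR n + 1))
           (fun y => cheb_u m y * (y + sigma) ^ L * sqrt (4 - y ^ 2))
           ((INR m + 1) * (2 + sigma) ^ L * 2)).
  - apply exs_mom; auto.
  - intros n y Hy. apply coef_bound; auto.
  - intros y Hy. rewrite !Rabs_mult.
    pose proof (cheb_bound m y Hy). pose proof (poly_bound sigma L y Hs Hy).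
    pose proof (wt_bound y).
    apply Rmult_le_compat; try apply Rabs_pos.
    apply Rmult_le_pos; apply Rabs_pos.
    apply Rmult_le_compat; try apply Rabs_pos; auto. auto.
  - intros n. eapply isR_ext_in. 2: apply (part1 sigma L m n).
    intros x Hx. rewrite Rmin_left, Rmax_right in Hx by lra. rewrite clamp_id by lra. ring.
Qed.

Lemma step2 sigma L alpha beta z0 z1 : 0 < sigma -> (forall n, 0 <= alpha n) -> (forall n, 0 <= beta n) ->
  ex_series (fun n => INR n * alpha n) -> ex_series (fun n => INR n * beta n) ->
  Rabs z0 <= 1 -> Rabs z1 <= 1 ->
  is_RInt (fun x => (Phi beta z1 (clamp x) * (clamp x + sigma) ^ L * sqrt (4 - clamp x ^ 2))
                    * Phi alpha z0 (clamp x)) (-2) 2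
    (Series (fun m => alpha m * z0 ^ m *
       Series (fun n => beta n * z1 ^ n * (2 * PI * motzkin_weight_sum sigma L m n)))).
Proof.
  intros Hs Ha Hb Hma Hmb Hz0 Hz1.
  unfold Phi at 2.
  apply (Gen (fun n => alpha n * z0 ^ n) (fun n => alpha n * (INR n + 1))
           (fun y => Phi beta z1 y * (y + sigma) ^ L * sqrt (4 - y ^ 2))
           (Series (fun n => beta n * (INR n + 1)) * (2 + sigma) ^ L * 2)).
  - apply exs_mom; auto.
  - intros n y Hy. apply coef_bound; auto.
  - intros y Hy. rewrite !Rabs_mult.
    pose proof (Phi_bound beta z1 y Hb Hz1 Hy (exs_mom _ Hb Hmb)).
    pose proof (poly_bound sigma L y Hs Hy).
    pose proof (wt_bound y).
    apply Rmult_le_compat; try apply Rabs_pos.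
    apply Rmult_le_pos; apply Rabs_pos.
    apply Rmult_le_compat; try apply Rabs_pos; auto. auto.
  - intros m. eapply isR_ext. 2: apply (step1 sigma L beta z1 m); auto.
    intros x. cbv beta. ring.
Qed.

Lemma Mfun_eq sigma L alpha beta z0 z1 : 0 < sigma -> (forall n, 0 <= alpha n) -> (forall n, 0 <= beta n) ->
  ex_series (fun n => INR n * alpha n) -> ex_series (fun n => INR n * beta n) ->
  Rabs z0 <= 1 -> Rabs z1 <= 1 ->
  Mfun alpha beta sigma L z0 z1 =
  Series (fun m => alpha m * z0 ^ m *
       Series (fun n => beta n * z1 ^ n * motzkin_weight_sum sigma L m n)).
Proof.
  intros Hs Ha Hb Hma Hmb Hz0 Hz1.
  assert (H := step2 sigma L alpha beta z0 z1 Hs Ha Hb Hma Hmb Hz0 Hz1).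
  unfold Mfun.
  rewrite (isR_unique _ _ _ (Series (fun m => alpha m * z0 ^ m *
       Series (fun n => beta n * z1 ^ n * (2 * PI * motzkin_weight_sum sigma L m n))))).
  2:{ eapply isR_ext_in. 2: exact H. intros x Hx.
      cbv beta. rewrite Rmin_left, Rmax_right in Hx by lra. rewrite clamp_id by lra. ring. }
  rewrite <- Series_scal_l. apply Series_ext. intros m.
  rewrite (Series_ext _ (fun n => 2 * PI * (beta n * z1 ^ n * motzkin_weight_sum sigma L m n))) by (intros; ring).
  rewrite Series_scal_l. field. apply PI_neq0.
Qed.

Lemma mf_start m L g : In g (motzkin_from m L) -> path_start g = m.
Proof. intros H. destruct (mf_shape _ _ _ H) as [t ->]. reflexivity. Qed.

Lemma mf_end_le m L g : In g (motzkin_from m L) -> (path_end g <= m + L)%nat.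
Proof.
  revert m g. induction L as [|L IH]; intros m g H.
  - simpl in H. destruct H as [<-|[]]. unfold path_end; simpl. lia.
  - cbn [motzkin_from] in H. apply in_map_iff in H. destruct H as [t [<- Ht]].
    assert (E : forall k, In t (motzkin_from k L) -> (path_end (m :: t) <= k + L)%nat).
    { intros k Hk. destruct (mf_shape _ _ _ Hk) as [t' ->].
      change (path_end (m :: k :: t')) with (path_end (k :: t')). apply IH; auto. }
    apply in_app_iff in Ht. destruct Ht as [Ht|Ht].
    + destruct m as [|m']. destruct Ht. specialize (E _ Ht). lia.
    + apply in_app_iff in Ht. destruct Ht as [Ht|Ht]; specialize (E _ Ht); lia.
Qed.

Lemma sumR_map_ext {A} (F G : A -> R) l : (forall g, In g l -> F g = G g) ->
  sumR (map F l) = sumR (map G l).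
Proof.
  induction l as [|a l IH]; intros H; simpl. reflexivity.
  unfold sumR in *; simpl. rewrite H by (left; auto). f_equal. apply IH. intros; apply H; right; auto.
Qed.

Lemma sumR_scal {A} c (F : A -> R) l : sumR (map (fun g => c * F g) l) = c * sumR (map F l).
Proof. induction l as [|a l IH]; unfold sumR in *; simpl. ring. rewrite IH. ring. Qed.

Lemma sum_zero (a : nat -> R) N : (forall n, (n <= N)%nat -> a n = 0) -> sum_f_R0 a N = 0.
Proof.
  induction N; intros H; simpl. apply H; lia.
  rewrite IHN by (intros; apply H; lia). rewrite H by lia. ring.
Qed.

Lemma sum_delta (c : nat -> R) e N : (e <= N)%nat ->
  sum_f_R0 (fun n => if Nat.eqb e n then c n else 0) N = c e.
Proof.
  induction N; intros H; simpl.
  - replace e with 0%nat by lia. reflexivity.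
  - destruct (Nat.eqb_spec e (S N)) as [->|Hne].
    + rewrite sum_zero. ring. intros n Hn. destruct (Nat.eqb_spec (S N) n); [lia|reflexivity].
    + rewrite IHN by lia. ring.
Qed.

Lemma grouping (F : nat -> R) (pw : list nat -> R) l N :
  (forall g, In g l -> (path_end g <= N)%nat) ->
  sumR (map (fun g => F (path_end g) * pw g) l) =
  sum_f_R0 (fun n => F n * sumR (map pw (filter (fun g => Nat.eqb (path_end g) n) l))) N.
Proof.
  induction l as [|g l IH]; intros H.
  - simpl. symmetry. apply sum_zero. intros; unfold sumR; simpl; ring.
  - rewrite (sum_eq _ (fun n => (if Nat.eqb (path_end g) n then F n * pw g else 0) +
         F n * sumR (map pw (filter (fun g => Nat.eqb (path_end g) n) l)))).
    + rewrite sum_plus. rewrite sum_delta by (apply H; left; auto).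
      rewrite <- IH by (intros; apply H; right; auto). unfold sumR; simpl. ring.
    + intros n _. simpl. destruct (Nat.eqb (path_end g) n); unfold sumR; simpl; ring.
Qed.

Lemma sum_stable (a : nat -> R) N K : (forall n, (N < n)%nat -> a n = 0) -> (N <= K)%nat ->
  sum_f_R0 a K = sum_f_R0 a N.
Proof.
  intros Ha HK. induction HK. reflexivity.
  simpl. rewrite IHHK. rewrite Ha by lia. ring.
Qed.

Lemma Series_finite (a : nat -> R) N : (forall n, (N < n)%nat -> a n = 0) ->
  Series a = sum_f_R0 a N.
Proof.
  intros Ha. apply is_series_unique. unfold is_series.
  apply filterlim_locally. intros eps. exists N. intros K HK.
  rewrite sum_n_Reals. rewrite (sum_stable a N K Ha HK). apply ball_center.
Qed.

Lemma W_zero sigma L m n : (m + L < n)%nat -> motzkin_weight_sum sigma L m n = 0.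
Proof.
  intros Hn. unfold motzkin_weight_sum.
  assert (H : forall g, In g (motzkin_from m L) -> (path_end g <= m + L)%nat) by apply mf_end_le.
  induction (motzkin_from m L) as [|g l IH]. reflexivity.
  simpl. replace (Nat.eqb (path_end g) n) with false.
  - apply IH. intros; apply H; right; auto.
  - symmetry. apply Nat.eqb_neq. specialize (H g (or_introl eq_refl)). lia.
Qed.

Lemma inner sigma L (alpha beta : nat -> R) z0 z1 m :
  sumR (map (fun g => alpha (path_start g) * beta (path_end g) * path_weight sigma g
                      * z0 ^ path_start g * z1 ^ path_end g) (motzkin_from m L))
  = alpha m * z0 ^ m * Series (fun n => beta n * z1 ^ n * motzkin_weight_sum sigma L m n).
Proof.
  rewrite (sumR_map_ext _ (fun g => (alpha m * z0 ^ m) *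
      ((beta (path_end g) * z1 ^ path_end g) * path_weight sigma g))).
  2:{ intros g Hg. rewrite (mf_start _ _ _ Hg). ring. }
  rewrite sumR_scal. f_equal.
  rewrite (grouping (fun n => beta n * z1 ^ n) (path_weight sigma) _ (m + L)) by apply mf_end_le.
  rewrite (Series_finite _ (m + L)).
  - reflexivity.
  - intros n Hn. rewrite W_zero by lia. ring.
Qed.

Definition TT sigma L (alpha beta : nat -> R) z0 z1 :=
  Series (fun m => alpha m * z0 ^ m *
       Series (fun n => beta n * z1 ^ n * motzkin_weight_sum sigma L m n)).

Lemma partition_eq sigma L alpha beta : partition_fn alpha beta sigma L = TT sigma L alpha beta 1 1.
Proof.
  unfold partition_fn, sum_over_paths, TT. apply Series_ext. intros m.
  rewrite <- inner. apply sumR_map_ext. intros g _. rewrite !pow1. ring.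
Qed.

Lemma expect_eq sigma L alpha beta z0 z1 :
  expect_gen alpha beta sigma L z0 z1 = / partition_fn alpha beta sigma L * TT sigma L alpha beta z0 z1.
Proof.
  unfold expect_gen, sum_over_paths, TT. rewrite <- Series_scal_l. apply Series_ext. intros m.
  rewrite <- inner. rewrite <- sumR_scal. apply sumR_map_ext. intros g _.
  unfold path_prob. unfold Rdiv. ring.
Qed.

Theorem lemma3p1 (sigma : R) (alpha beta : nat -> R)
  (Hsigma : 0 < sigma)
  (Ha0 : forall n, 0 <= alpha n) (Hb0 : forall n, 0 <= beta n)
  (Ha_nz : exists n, alpha n <> 0) (Hb_nz : exists n, beta n <> 0)
  (Ha_mom : ex_series (fun n => INR n * alpha n))
  (Hb_mom : ex_series (fun n => INR n * beta n)) :
  forall L : nat, (1 <= L)%nat ->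
    (forall m n : nat,
       / (2 * PI) * RInt (fun x => cheb_u m x * cheb_u n x * (x + sigma) ^ L
                                   * sqrt (4 - x ^ 2)) (-2) 2
       = motzkin_weight_sum sigma L m n)
    /\
    (forall z0 z1 : R, Rabs z0 <= 1 -> Rabs z1 <= 1 ->
       expect_gen alpha beta sigma L z0 z1
       = Mfun alpha beta sigma L z0 z1 / Mfun alpha beta sigma L 1 1).
Proof.
  intros L _. split.
  - intros m n. rewrite (isR_unique _ _ _ _ (part1 sigma L m n)).
    field. apply PI_neq0.
  - intros z0 z1 Hz0 Hz1.
    assert (H1 : Rabs 1 <= 1) by (rewrite Rabs_R1; lra).
    rewrite expect_eq, partition_eq.
    rewrite (Mfun_eq sigma L alpha beta z0 z1), (Mfun_eq sigma L alpha beta 1 1); auto.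
    unfold TT, Rdiv. ring.
Qed.
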